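(* For every $a^*>0$ and every $\beta>0$, $\kappa_1(4\pi,\beta)<\beta$.
   Context: $\mathcal F_{4\pi}$ is the set of $f\in L^2(]0,a^*[)$ whose distributional derivative satisfies $\int_0^{a^*}a|f'(a)|^2da<\infty$, and $\kappa_1(4\pi,\beta):=\inf_{f\in\mathcal F_{4\pi}\setminus\{0\}}\frac{\int_0^{a^*}\left(4\pi a|f'|^2+\frac{\beta^2a}{4\pi}|f|^2\right)da}{\int_0^{a^*}|f|^2da}$. *)

(* Defs.v *)
From HB Require Import structures.
From mathcomp Require Import all_boot all_order all_algebra.
From mathcomp Require Import all_classical all_reals all_analysis.
Set Implicit Arguments. Unset Strict Implicit. Unset Printing Implicit Defensive.
Import Order.TTheory GRing.Theory Num.Theory.
Import numFieldNormedType.Exports.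
Local Open Scope classical_set_scope.
Local Open Scope ring_scope.

Section Defs.
Variable R : realType.
Local Notation mu := (@lebesgue_measure R).

Definition Iopen (astar : R) : set R := `]0, astar[%classic.

Definition test_fun (astar : R) (phi : R -> R) : Prop :=
  (forall (n : nat) (x : R), derivable (derive1n n phi) x 1) /\
  exists c d : R, 0 < c /\ c <= d /\ d < astar /\
    (forall x, x < c \/ d < x -> phi x = 0).

Definition distr_deriv (astar : R) (f g : R -> R) : Prop :=
  measurable_fun (Iopen astar) g /\
  forall phi, test_fun astar phi ->
    Rintegral mu (Iopen astar) (fun x : R => f x * derive1 phi x) =
    - Rintegral mu (Iopen astar) (fun x : R => g x * phi x).

Definition L2 (astar : R) (f : R -> R) : Prop :=
  measurable_fun (Iopen astar) f /\
  (\int[mu]_(x in Iopen astar) ((f x) ^+ 2)%:E < +oo)%E.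

Definition F4pi (astar : R) (f g : R -> R) : Prop :=
  L2 astar f /\ distr_deriv astar f g /\
  (\int[mu]_(x in Iopen astar) (x * (g x) ^+ 2)%:E < +oo)%E.

Definition L2_zero (astar : R) (f : R -> R) : Prop :=
  {ae mu, forall x, Iopen astar x -> f x = 0}.

Definition rayleigh (astar beta : R) (f g : R -> R) : R :=
  Rintegral mu (Iopen astar)
    (fun x : R => 4 * pi * x * (g x) ^+ 2 + beta ^+ 2 * x / (4 * pi) * (f x) ^+ 2)
  / Rintegral mu (Iopen astar) (fun x : R => (f x) ^+ 2).

Definition kappa1 (astar beta : R) : R :=
  inf [set q | exists f g : R -> R,
         F4pi astar f g /\ ~ L2_zero astar f /\ q = rayleigh astar beta f g].

End Defs.

(* Main.v *)
Require Import Defs.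
From HB Require Import structures.
From mathcomp Require Import all_boot all_order all_algebra.
From mathcomp Require Import all_classical all_reals all_analysis.
From mathcomp Require Import ring lra.
Import Order.TTheory GRing.Theory Num.Theory.
Import numFieldNormedType.Exports.
Local Open Scope classical_set_scope.
Local Open Scope ring_scope.

Section Helpers.
Variable R : realType.
Local Notation mu := (@lebesgue_measure R).

Lemma cont_integrable (h : R -> R) (A : set R) (a b : R) :
  A `<=` `[a, b] -> measurable A -> continuous h -> mu.-integrable A (EFin \o h).
Proof.
move=> sA mA ch; have := integrableS (mu := mu) (f := EFin \o h) (measurable_itv `[a, b]) mA sA; apply.
apply: continuous_compact_integrable; first exact: segment_compact.
exact: continuous_subspaceT.
Qed.

Lemma Iopen_Icc (h : R -> R) (a : R) : continuous h ->
  Rintegral mu (Iopen a) h = \int[mu]_(x in `[0, a]) h x.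
Proof.
move=> ch; rewrite /Iopen Rintegral_itv_obnd_cbnd; last first.
  apply: (@cont_integrable _ _ 0 a) => //.
  by move=> x /=; rewrite !in_itv /= => /andP[h1 h2]; rewrite (ltW h1) (ltW h2).
rewrite Rintegral_itv_bndo_bndc //.
apply: (@cont_integrable _ _ 0 a) => //.
by move=> x /=; rewrite !in_itv /= => /andP[h1 h2]; rewrite h1 (ltW h2).
Qed.

Lemma is_derive_e (m x : R) :
  is_derive x 1 (fun y => expR (m * y)) (m * expR (m * x)).
Proof.
have dm : derivable ( *%R m) x 1.
  have := @derivableZ R R R id m x 1 (@derivable_id R R x 1). exact.
have de : derivable expR (m * x) 1 := @ex_derive _ _ _ _ _ _ _ (is_derive_expR (m * x)).
have d : derivable (expR \o ( *%R m)) x 1.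
  apply/derivable1_diffP; apply: differentiable_comp; exact/derivable1_diffP.
have H := derivableP d; apply: (is_derive_eq H).
rewrite -derive1E (derive1_comp dm de).
have hz : is_derive x 1 ( *%R m) (m *: 1) := is_deriveZ m (is_derive_id x 1).
rewrite derive1E (@derive_val _ _ _ _ _ _ _ (is_derive_expR _)).
rewrite derive1E (@derive_val _ _ _ _ _ _ _ hz).
by rewrite /GRing.scale /= mulr1 mulrC.
Qed.


Lemma der_cont (F : R -> R) : (forall x, derivable F x 1) -> continuous F.
Proof.
move=> dF x; apply: differentiable_continuous; exact/derivable1_diffP.
Qed.

Lemma dLR (F : R -> R) (a : R) : (forall x, derivable F x 1) ->
  derivable_oo_LRcontinuous F 0 a.
Proof.
move=> dF; have cF := @der_cont F dF; split.
- by move=> x _; exact: dF.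
- exact/cvg_at_right_filter/cF.
- exact/cvg_at_left_filter/cF.
Qed.

Lemma int_lt_oo (h : R -> R) (a : R) : continuous h ->
  (\int[mu]_(x in Iopen a) (h x)%:E < +oo)%E.
Proof.
move=> ch.
have hi : mu.-integrable (Iopen a) (EFin \o h).
  apply: (@cont_integrable _ _ 0 a) => //.
  by move=> x /=; rewrite !in_itv /= => /andP[h1 h2]; rewrite (ltW h1) (ltW h2).
  exact: measurable_itv.
move/integrableP: hi => [mh hfin].
apply: le_lt_trans hfin.
apply: le_trans (lee_abs _) _.
exact: (le_abse_integral mu (measurable_itv _) mh).
Qed.

Lemma cont_meas (h : R -> R) (a : R) : continuous h -> measurable_fun (Iopen a) h.
Proof.
move=> ch; apply: measurable_funTS; exact: measurable_realfun.continuous_measurable_fun.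
Qed.


Lemma contM (f g : R -> R) : continuous f -> continuous g ->
  continuous (fun x => f x * g x).
Proof. move=> cf cg x; exact: (@continuousM _ _ f g x (cf x) (cg x)). Qed.

Lemma contD (f g : R -> R) : continuous f -> continuous g ->
  continuous (fun x => f x + g x).
Proof. move=> cf cg x; exact: (@continuousD _ _ _ f g x (cf x) (cg x)). Qed.

Lemma contC (c : R) : continuous (fun _ : R => c).
Proof. by move=> x; exact: cst_continuous. Qed.

Lemma contI : continuous (fun x : R => x).
Proof. by move=> x; exact: cvg_id. Qed.

Lemma cont_e (m : R) : continuous (fun y => expR (m * y)).
Proof. apply: der_cont => x; exact: (@ex_derive _ _ _ _ _ _ _ (is_derive_e m x)). Qed.

Lemma cont_g (m : R) : continuous (fun y => m * expR (m * y)).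
Proof. move=> x; exact: (@continuousM _ _ (cst m) (fun y => expR (m * y)) x (@cst_continuous _ _ _ x) (cont_e m x)). Qed.

Lemma dd (a m : R) : 0 < a ->
  distr_deriv a (fun x => expR (m * x)) (fun x => m * expR (m * x)).
Proof.
move=> ha; split; first by apply: cont_meas; exact: cont_g.
move=> phi [dphi [c [d [c0 [cd [da supp]]]]]].
have dphi0 : forall x, derivable phi x 1 := dphi 0%N.
have dphi1 : forall x, derivable (derive1 phi) x 1 := dphi 1%N.
have cphi := @der_cont _ dphi0.
have cphi1 := @der_cont _ dphi1.
rewrite !Iopen_Icc; last first.
all: try (by apply: contM; [first [exact: cont_g | exact: cont_e] | first [exact: cphi | exact: cphi1]]).
rewrite (@Rintegration_by_parts R (fun x => expR (m * x)) phi
  (fun x => m * expR (m * x)) (derive1 phi) 0 a ha).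
- rewrite (supp 0); last by left.
  rewrite (supp a); last by right.
  by rewrite !mulr0 subrr sub0r.
- exact: continuous_subspaceT (cont_g m).
- apply: dLR => x; exact: (@ex_derive _ _ _ _ _ _ _ (is_derive_e m x)).
- by move=> x _; rewrite derive1E; exact: (@derive_val _ _ _ _ _ _ _ (is_derive_e m x)).
- exact: continuous_subspaceT cphi1.
- exact: dLR.
- by [].
Qed.


Lemma int_Iopen (h : R -> R) (a : R) : continuous h ->
  mu.-integrable (Iopen a) (EFin \o h).
Proof.
move=> ch; apply: (@cont_integrable _ _ 0 a) => //; last exact: measurable_itv.
by move=> x /=; rewrite !in_itv /= => /andP[h1 h2]; rewrite (ltW h1) (ltW h2).
Qed.

Lemma contX2 (h : R -> R) : continuous h -> continuous (fun x => h x ^+ 2).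
Proof.
move=> ch; have -> : (fun x => h x ^+ 2) = (fun x => h x * h x).
  by apply: funext => x; rewrite expr2.
exact: contM.
Qed.

Ltac cont_tac := repeat first [ exact: contI | exact: contC | exact: cont_e
  | exact: cont_g | apply: contD | apply: contM | apply: contX2 ].

Lemma is_derive_F (n x : R) :
  is_derive x 1 (fun y => y * expR (n * y))
    (expR (n * x) + n * (x * expR (n * x))).
Proof.
have h := is_deriveM (is_derive_id x 1) (is_derive_e n x).
have h2 : is_derive x 1 (fun y => y * expR (n * y)) _ := h.
apply: (is_derive_eq h2).
rewrite /GRing.scale /=; ring.
Qed.

Lemma key (a n : R) : 0 < a ->
  0 < Rintegral mu (Iopen a) (fun x => expR (n * x)) +
      n * Rintegral mu (Iopen a) (fun x => x * expR (n * x)).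
Proof.
move=> ha.
have cQ := cont_e n.
have cP : continuous (fun x : R => x * expR (n * x)) by cont_tac.
have sub : Iopen a `<=` `[0, a].
  by move=> x /=; rewrite !in_itv /= => /andP[h1 h2]; rewrite (ltW h1) (ltW h2).
rewrite -RintegralZl; last 2 first.
- exact: measurable_itv.
- exact: int_Iopen.
rewrite -RintegralD; last 3 first.
- exact: measurable_itv.
- exact: int_Iopen.
- by apply: int_Iopen; cont_tac.
rewrite Iopen_Icc; last by cont_tac.
rewrite /Rintegral (@continuous_FTC2 R _ (fun y => y * expR (n * y)) 0 a ha).
- rewrite -EFinB /= mul0r subr0; apply: mulr_gt0 => //; exact: expR_gt0.
- by apply: continuous_subspaceT; cont_tac.
- apply: dLR => x; exact: (@ex_derive _ _ _ _ _ _ _ (is_derive_F n x)).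
- by move=> x _; rewrite derive1E; exact: (@derive_val _ _ _ _ _ _ _ (is_derive_F n x)).
Qed.

End Helpers.

Arguments cont_e {R}. Arguments cont_g {R}. Arguments contI {R}. Arguments contC {R}.
Arguments contM {R}. Arguments contD {R}. Arguments contX2 {R}. Arguments cont_meas {R}.
Arguments int_lt_oo {R}. Arguments dd {R}. Arguments key {R}. Arguments int_Iopen {R}.

Ltac cont_tac := repeat first [ exact: contI | exact: contC | exact: cont_e
  | exact: cont_g | apply: contD | apply: contM | apply: contX2 ].

Theorem mainTheorem8 (R : realType) (astar beta : R) :
  0 < astar -> 0 < beta -> kappa1 astar beta < beta.
Proof.
move=> ha hb.
set a := astar; set b := beta.
have pi0 : (0 : R) < pi := pi_gt0 R.
set k := b / (4 * pi).
have k0 : 0 < k by rewrite /k divr_gt0 // mulr_gt0.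
set m := - k.
pose f := fun x : R => expR (m * x).
pose g := fun x : R => m * expR (m * x).
have E2 : forall x, f x ^+ 2 = expR ((2 * m) * x).
  by move=> x; rewrite /f -expRM_natl mulrA.
rewrite /kappa1; set S := [set q | _].
have mem : S (rayleigh a b f g).
  exists f, g; split; last split => //.
  - split; [split|split].
    + exact: (cont_meas f a (cont_e m)).
    + by apply: int_lt_oo; apply: contX2; exact: cont_e.
    + exact: dd.
    + by apply: int_lt_oo; apply: contM; [exact: contI | apply: contX2; exact: cont_g].
  - move=> [N [mN N0 sN]].
    have sub : Iopen a `<=` N.
      move=> x ix; apply: sN => /= h; have := h ix; apply/eqP.
      by rewrite gt_eqF // expR_gt0.
    have h2 : (lebesgue_measure (Iopen a) <= 0)%E.
      rewrite -N0; apply: le_measure => //; rewrite inE //; exact: measurable_itv.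
    move: h2; rewrite /Iopen lebesgue_measure_itv /=.
    rewrite lte_fin ha oppr0 addr0 lee_fin => h.
    by have := lt_le_trans ha h; rewrite ltxx.
have lb : has_lbound S.
  exists 0 => q [f' [g' [_ [_ ->]]]].
  rewrite /rayleigh divr_ge0 // Rintegral_ge0 // => x /=.
  1,2: rewrite /Iopen /= => hx; have x0 : 0 < x by move: hx; first [ by move/andP => [] | by rewrite (@in_itv _ R) /= => /andP[] ].
  - apply: addr_ge0; apply: mulr_ge0; rewrite ?sqr_ge0 //.
      by rewrite mulr_ge0 // ?mulr_ge0 // ltW.
    by rewrite mulr_ge0 // ?invr_ge0 ?mulr_ge0 ?sqr_ge0 // ltW.
  - by rewrite sqr_ge0.
apply: le_lt_trans (ge_inf lb mem) _.
rewrite /rayleigh.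
have pi0' : (pi : R) != 0 by rewrite gt_eqF.
rewrite (@eq_Rintegral _ _ _ (@lebesgue_measure R) (Iopen a) (fun x : R => (2 * k * b) * (x * expR ((2 * m) * x))) (fun x : R => 4 * pi * x * g x ^+ 2 + b ^+ 2 * x / (4 * pi) * f x ^+ 2)); last first.
  move=> x _; rewrite /g exprMn -/(f x) E2 /m /k.
  move: pi0'; generalize (pi : R) => p hp; field.
  by rewrite hp.
rewrite (@eq_Rintegral _ _ _ (@lebesgue_measure R) (Iopen a) (fun x : R => expR ((2 * m) * x)) (fun x : R => f x ^+ 2)); last first.
  by move=> x _; rewrite E2.
rewrite RintegralZl; last 2 first.
- exact: measurable_itv.
- by apply: int_Iopen; cont_tac.
have K := key a (2 * m) ha.
set D := Rintegral _ _ (fun x => expR _) in K *.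
set I1 := Rintegral _ _ _ in K *.
have I0 : 0 <= I1.
  rewrite /I1; apply: Rintegral_ge0 => x.
  rewrite /Iopen /= => hx.
  have x0 : 0 < x by first [ by move/andP: hx => [] | by move: hx; rewrite (@in_itv _ R) /= => /andP[] ].
  by rewrite mulr_ge0 ?ltW ?expR_gt0.
rewrite /m in K.
have kI : 0 <= k * I1 by rewrite mulr_ge0 // ltW.
have D0 : 0 < D.
  move: K kI; clearbody D I1; move: (k) => k' K' kI'; nra.
rewrite ltr_pdivrMr //.
have hb2 : 0 < b := hb.
have := mulr_gt0 hb2 K.
move: K kI D0 hb2; clearbody D I1; move: (k) (b) => k' b' K' kI' D0' hb'; nra.
Qed.
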